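(* Let $f_i(z)$ and $g_i(z)$ be the generating functions (by length) of partial ternary paths ending at level $i$ and of reversed partial ternary paths ending at level $i$, respectively. Then $$\sum_{i\ge0} i\,f_i(z)\,g_i(z)=\frac{3t}{(1-3t)^2(1-t)},$$ where $t$ is the formal power series in $x=z^3$ with $t(1-t)^2=x$, $t=x+2x^2+\cdots$. Consequently the coefficient of $z^{3N}$ in this series is the total area of all ternary paths of length $3N$.
   Context: A partial ternary path: lattice path from $(0,0)$ with steps $(1,1)$, $(1,-2)$, all ordinates $\ge0$, ending at level equal to its final ordinate. A reversed partial ternary path: lattice path from $(0,0)$ with steps $(1,2)$, $(1,-1)$, all ordinates $\ge 0$. A ternary path of length $3N$ is a partial ternary path of length $3N$ ending at level $0$; its area is the sum of its ordinates $c_0+\cdots+c_{3N}$, and the total area is the sum over all such paths. *)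

(* Defs.v *)
From HB Require Import structures.
From mathcomp Require Import all_boot all_order all_algebra.
Set Implicit Arguments. Unset Strict Implicit. Unset Printing Implicit Defensive.
Import Order.TTheory GRing.Theory Num.Theory.
Local Open Scope ring_scope.

(* A path of length n is a sequence of n steps; [true] = up-step, [false] = down-step. *)

(* partial ternary paths: steps (1,1) and (1,-2) *)
Definition tstep (b : bool) : int := if b then 1 else -2.
(* reversed partial ternary paths: steps (1,2) and (1,-1) *)
Definition rstep (b : bool) : int := if b then 2 else -1.

(* ordinates c_1, ..., c_n of the path starting at (0,0) (c_0 = 0 is omitted) *)
Definition ordinates (st : bool -> int) (s : seq bool) : seq int :=
  scanl (fun h b => h + st b) 0 s.

Definition nonneg_path (st : bool -> int) (s : seq bool) : bool :=
  all (fun h => 0 <= h) (ordinates st s).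

Definition final_level (st : bool -> int) (s : seq bool) : int :=
  last 0 (ordinates st s).

Definition npaths (st : bool -> int) (n : nat) (i : nat) : nat :=
  #|[set s : n.-tuple bool | nonneg_path st s && (final_level st s == i%:Z)]|.

(* f_i(z) = \sum_n npaths tstep n i z^n ,  g_i(z) = \sum_n npaths rstep n i z^n *)
Definition f_coef (i n : nat) : nat := npaths tstep n i.
Definition g_coef (i n : nat) : nat := npaths rstep n i.

(* coefficient of z^m in \sum_{i>=0} i f_i(z) g_i(z).  Only i <= m can
   contribute, since f_i has no terms of degree < i (each step raises the
   level by at most 1). *)
Definition S_coef (m : nat) : nat :=
  \sum_(i < m.+1) i * \sum_(a < m.+1) f_coef i a * g_coef i (m - a).

Definition area (s : seq bool) : int := \sum_(h <- ordinates tstep s) h.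

Definition total_area (N : nat) : int :=
  \sum_(s : (3 * N).-tuple bool | nonneg_path tstep s && (final_level tstep s == 0))
     area s.

Definition series := nat -> rat.

Definition sconst (c : rat) : series := fun n => if n == 0%N then c else 0.
Definition sX : series := fun n => if n == 1%N then 1 else 0.
Definition sadd (a b : series) : series := fun n => a n + b n.
Definition ssub (a b : series) : series := fun n => a n - b n.
Definition sscale (c : rat) (a : series) : series := fun n => c * a n.
Definition smul (a b : series) : series :=
  fun n => \sum_(k < n.+1) a k * b (n - k)%N.

(* multiplicative inverse of a series with nonzero constant term:
   b_0 = 1/a_0,  b_n = -(1/a_0) \sum_{k=1}^n a_k b_{n-k} *)
Fixpoint sinv_list (a : series) (n : nat) : seq rat :=
  match n with
  | 0%N => [:: (a 0%N)^-1]
  | n'.+1 => let l := sinv_list a n' in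
             rcons l (- (a 0%N)^-1 *
                        \sum_(1 <= k < n'.+2) a k * nth 0 l (n'.+1 - k)%N)
  end.
Definition sinv (a : series) : series := fun n => nth 0 (sinv_list a n) n.

Definition rhs_series (t : series) : series :=
  smul (sscale 3 t)
       (sinv (smul (smul (ssub (sconst 1) (sscale 3 t)) (ssub (sconst 1) (sscale 3 t)))
                   (ssub (sconst 1) t))).

(* Main.v *)
Require Import Defs.
From HB Require Import structures.
From mathcomp Require Import all_boot all_order all_algebra.
From mathcomp Require boolp.
From mathcomp Require Import ring zify.
Import Order.TTheory GRing.Theory Num.Theory.
Local Open Scope ring_scope.

HB.instance Definition _ := boolp.gen_eqMixin series.
HB.instance Definition _ := boolp.gen_choiceMixin series.

Definition sopp (a : series) : series := fun n => - a n.
Lemma sfunext (a b : series) : (forall n, a n = b n) -> a = b.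
Proof. move=> h; exact: boolp.functional_extensionality_dep. Qed.

Lemma saddA : associative sadd.
Proof. by move=> a b c; apply: sfunext => n; rewrite /sadd addrA. Qed.
Lemma saddC : commutative sadd.
Proof. by move=> a b; apply: sfunext => n; rewrite /sadd addrC. Qed.
Lemma sadd0 : left_id (sconst 0) sadd.
Proof. by move=> a; apply: sfunext => n; rewrite /sadd /sconst; case: (n == 0)%N; rewrite add0r. Qed.
Lemma saddN : left_inverse (sconst 0) sopp sadd.
Proof. by move=> a; apply: sfunext => n; rewrite /sadd /sconst /sopp addNr; case: (n == 0)%N. Qed.

HB.instance Definition _ := GRing.isZmodule.Build series saddA saddC sadd0 saddN.

Definition P (a : series) n : {poly rat} := \poly_(i < n.+1) a i.
Lemma smulE a b n k : (k <= n)%N -> smul a b k = (P a n * P b n)`_k.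
Proof.
move=> kn; rewrite coefM /smul; apply: eq_bigr => i _.
rewrite !coef_poly; have /= := ltn_ord i => ik.
rewrite ifT; last by lia. by rewrite ifT; last by lia.
Qed.
Lemma coefM_ext (X X' Y : {poly rat}) n :
  (forall k, (k <= n)%N -> X`_k = X'`_k) -> (X * Y)`_n = (X' * Y)`_n.
Proof.
move=> h; rewrite !coefM; apply: eq_bigr => i _; rewrite h //.
by have := ltn_ord i; lia.
Qed.
Lemma Psmul a b n k : (k <= n)%N -> (P (smul a b) n)`_k = (P a n * P b n)`_k.
Proof. by move=> kn; rewrite coef_poly ltnS kn (@smulE _ _ n). Qed.
Lemma smulA : associative smul.
Proof.
move=> a b c; apply: sfunext => n.
rewrite (@smulE _ _ n n (leqnn n)) [RHS](@smulE _ _ n n (leqnn n)).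
rewrite mulrC (@coefM_ext (P (smul b c) n) (P b n * P c n) (P a n) n); last exact: Psmul.
rewrite [RHS](@coefM_ext (P (smul a b) n) (P a n * P b n) (P c n) n); last exact: Psmul.
by rewrite mulrC mulrA.
Qed.
Lemma smulC : commutative smul.
Proof.
move=> a b; apply: sfunext => n.
by rewrite (@smulE _ _ n n (leqnn n)) [RHS](@smulE _ _ n n (leqnn n)) mulrC.
Qed.
Lemma smul1 : left_id (sconst 1) smul.
Proof.
move=> a; apply: sfunext => n; rewrite /smul big_ord_recl /= subn0 /sconst /= mul1r.
by rewrite big1 ?addr0 // => i _; rewrite mul0r.
Qed.
Lemma smulDl : left_distributive smul sadd.
Proof.
move=> a b c; apply: sfunext => n; rewrite /smul /sadd -big_split /=.
by apply: eq_bigr => i _; rewrite mulrDl.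
Qed.
Lemma one_neq0 : sconst 1 != sconst 0.
Proof.
apply/eqP => h; have := congr1 (fun f => f 0%N) h; rewrite /sconst /=.
by move/eqP; rewrite oner_eq0.
Qed.
HB.instance Definition _ := GRing.Zmodule_isComNzRing.Build series smulA smulC smul1 smulDl one_neq0.

Lemma sD (a b : series) n : (a + b) n = a n + b n. Proof. by []. Qed.
Lemma sN (a : series) n : (- a) n = - a n. Proof. by []. Qed.
Lemma sB (a b : series) n : (a - b) n = a n - b n. Proof. by []. Qed.
Lemma s1 n : (1 : series) n = (n == 0)%:R.
Proof. by case: n. Qed.
Lemma s0 n : (0 : series) n = 0.
Proof. by case: n. Qed.
Lemma sMn (a : series) k n : (a *+ k) n = a n *+ k.
Proof. elim: k => [|k IH]; first by rewrite !mulr0n s0. by rewrite !mulrS sD IH. Qed.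
Lemma snatM (a : series) k n : (k%:R * a) n = k%:R * a n.
Proof. by rewrite mulr_natl sMn mulr_natl. Qed.
Lemma sM (a b : series) n : (a * b) n = \sum_(k < n.+1) a k * b (n - k)%N.
Proof. by []. Qed.
Lemma sM0 (a b : series) : (a * b) 0%N = a 0%N * b 0%N.
Proof. by rewrite sM big_ord1. Qed.
Lemma sXM (a : series) n : (sX * a) n = if n is n'.+1 then a n' else 0.
Proof.
rewrite sM; case: n => [|n]; first by rewrite big_ord1 /sX mul0r.
rewrite big_ord_recl /sX /= mul0r add0r big_ord_recl /= mul1r subSS subn0.
by rewrite big1 ?addr0 // => i _; rewrite mul0r.
Qed.
Lemma sscaleE c (a : series) : sscale c a = sconst c * a.
Proof.
apply: sfunext => n; rewrite sM big_ord_recl /= subn0 /sscale /sconst /=.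
by rewrite big1 ?addr0 // => i _; rewrite mul0r.
Qed.
Lemma sconst3 : sconst 3 = 3%:R.
Proof.
apply: sfunext => n; have -> : (3%:R : series) = 3%:R * 1 by rewrite mulr1.
by rewrite snatM s1 /sconst; case: (n == 0)%N; rewrite ?mulr0 ?mulr1.
Qed.

Lemma size_sinv_list a n : size (sinv_list a n) = n.+1.
Proof. by elim: n => //= n IH; rewrite size_rcons IH. Qed.
Lemma nth_sinv_list a n k : (k <= n)%N -> nth 0 (sinv_list a n) k = sinv a k.
Proof.
elim: n => [|n IH] kn; first by move: kn; rewrite leqn0 => /eqP ->.
rewrite leq_eqVlt in kn; case/orP: kn => [/eqP -> //|kn].
by rewrite /= nth_rcons size_sinv_list kn IH.
Qed.
Lemma sinvS a n : sinv a n.+1 =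
  - (a 0%N)^-1 * \sum_(1 <= k < n.+2) a k * sinv a (n.+1 - k)%N.
Proof.
rewrite /sinv /= nth_rcons size_sinv_list ltnn eqxx; congr (_ * _).
rewrite big_nat_cond [RHS]big_nat_cond; apply: eq_bigr => k /andP[/andP[k1 k2] _].
by rewrite nth_sinv_list //; lia.
Qed.
Lemma sinvP (a : series) : a 0%N != 0 -> a * sinv a = 1.
Proof.
move=> a0; apply: sfunext => n; rewrite s1; case: n => [|n].
  by rewrite sM0 /sinv /= divff.
rewrite sM big_ord_recl /= subn0 sinvS mulrA mulrN mulfV // mulN1r.
rewrite big_add1 big_mkord; apply/eqP; rewrite addrC subr_eq0; apply/eqP.
apply: eq_bigr => i _ /=; by rewrite /bump /= add1n.
Qed.


Set Implicit Arguments. Unset Strict Implicit. Unset Printing Implicit Defensive.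

Fixpoint tri (i : nat) : nat := if i is i'.+1 then (tri i' + i)%N else 0%N.

Section Alg.
Variable t : series.
Hypothesis ht0 : t 0%N = 0.
Hypothesis htx : t * ((1 - t) * (1 - t)) = sX.

Definition T := sinv (1 - t).
Definition u := sinv (1 - 3%:R * t).
Definition W := T * u.
Definition Dd := (1 - 3%:R * t) * (1 - 3%:R * t) * (1 - t).
Definition A := 3%:R * t * sinv Dd.
Definition Aform i := T ^+ i * ((i.+1)%:R * A + (tri i)%:R * W).

Lemma e1 : (1 - t) * T = 1.
Proof. apply: sinvP; by rewrite sB s1 ht0 subr0 oner_eq0. Qed.
Lemma hu : (1 - 3%:R * t) * u = 1.
Proof. apply: sinvP; by rewrite sB s1 snatM ht0 mulr0 subr0 oner_eq0. Qed.
Lemma hD : Dd * sinv Dd = 1.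
Proof.
apply: sinvP; rewrite /Dd !sM0 !sB s1 snatM ht0 mulr0 !subr0 !mulr1 oner_eq0 //.
Qed.
Lemma e2 : W * (1 - 3%:R * t) = T.
Proof. by rewrite /W -mulrA [u * _]mulrC hu mulr1. Qed.
Lemma e3 : A * (1 - 3%:R * t) = 3%:R * t * W.
Proof.
have h : T * u = T * u * (Dd * sinv Dd) by rewrite hD mulr1.
have h2 : T * u * (Dd * sinv Dd) = ((1 - t) * T) * ((1 - 3%:R * t) * u) * ((1 - 3%:R * t) * sinv Dd).
  by rewrite /Dd; ring.
rewrite /W h h2 e1 hu /A; ring.
Qed.
Lemma hx : sX = t * ((1 - t) * (1 - t)). Proof. by rewrite htx. Qed.

Lemma I1 : T = 1 + sX * T ^+ 3.
Proof.
apply/eqP; rewrite -subr_eq0; apply/eqP.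
have -> : T - (1 + sX * T ^+ 3) = ((1-t)*T - 1) * (1 - t*T*((1-t)*T + 1)).
  by rewrite hx; ring.
by rewrite e1 subrr mul0r.
Qed.
Lemma I2 j : T ^+ j.+2 = T ^+ j.+1 + sX * T ^+ j.+4.
Proof.
by rewrite exprS {1}I1 !exprS; ring.
Qed.
Lemma I3 : A = sX * Aform 2.
Proof.
apply/eqP; rewrite -subr_eq0; apply/eqP; rewrite /Aform /=.
have -> : A - sX * (T ^+ 2 * (3%:R * A + 3%:R * W)) =
  (A * (1 - 3%:R * t) - 3%:R * t * W) - t * ((1-t)*T - 1) * ((1-t)*T + 1) * (3%:R * A + 3%:R * W).
  by rewrite hx; ring.
by rewrite e3 e1 !subrr; ring.
Qed.
Lemma I4 j : Aform j.+1 = Aform j + sX * Aform (j + 3) + (j.+1)%:R * T ^+ j.+2.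
Proof.
apply/eqP; rewrite -subr_eq0; apply/eqP; rewrite /Aform.
have -> : tri (j + 3) = (tri j + 3 * j + 6)%N by rewrite addn3 /=; lia.
have -> : tri j.+1 = (tri j + j + 1)%N by rewrite /=; lia.
rewrite !exprS exprD !natrD ?natrM.
set c := (tri j)%:R.
set r1 := (1 - t) * T - 1.
set r2 := W * (1 - 3%:R * t) - T.
set r3 := A * (1 - 3%:R * t) - 3%:R * t * W.
rewrite [LHS](_ : _ = T ^+ j * (T * r3 + (j.+1)%:R * T * r2
   - (3%:R * A + 3%:R * j%:R * W + 6%:R * W) * r1
   - r1 * (t * T * (r1 + 2%:R) - 1) * ((j + 4)%:R * A + (c + 3%:R * j%:R + 6%:R) * W))).
  by rewrite /r1 /r2 /r3 e1 e2 e3 !subrr; ring.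
rewrite /r1 /r2 /r3 hx; ring.
Qed.
End Alg.


Set Implicit Arguments. Unset Strict Implicit. Unset Printing Implicit Defensive.

Fixpoint allbs (n : nat) : seq (seq bool) :=
  if n is n'.+1 then [seq rcons s b | s <- allbs n', b <- [:: true; false]] else [:: [::]].

Lemma mem_allbs n s : (s \in allbs n) = (size s == n).
Proof.
elim: n s => [|n IH] s; first by case: s.
apply/allpairsP/idP => [[[s' b] /= [h1 _ ->]]|].
  by rewrite size_rcons eqSS -IH.
case/lastP: s => [//|s b]; rewrite size_rcons eqSS => hs.
by exists (s, b); rewrite /= IH hs; case: b.
Qed.

Lemma uniq_allbs n : uniq (allbs n).
Proof.
elim: n => [//|n IH]; apply: allpairs_uniq => //.
by move=> [s b] [s' b'] _ _ /= /rcons_inj.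
Qed.

Lemma big_allbsS (F : seq bool -> int) n :
  \sum_(s <- allbs n.+1) F s = \sum_(s <- allbs n) (F (rcons s true) + F (rcons s false)).
Proof.
by rewrite big_allpairs_dep; apply: eq_bigr => s _; rewrite big_cons big_seq1.
Qed.

Section Paths.
Variable st : bool -> int.
Definition stepf := fun h b => h + st b.

Lemma last_scanl x s : last x (scanl stepf x s) = foldl stepf x s.
Proof. by elim: s x => //= b s IH x; rewrite IH. Qed.
Lemma fin_foldl s : final_level st s = foldl stepf 0 s.
Proof. exact: last_scanl. Qed.
Lemma ord_rcons s b : ordinates st (rcons s b) = rcons (ordinates st s) (final_level st s + st b).
Proof. by rewrite /ordinates scanl_rcons foldl_rcons fin_foldl. Qed.
Lemma fin_rcons s b : final_level st (rcons s b) = final_level st s + st b.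
Proof. by rewrite /final_level ord_rcons last_rcons. Qed.
Lemma nonneg_rcons s b : nonneg_path st (rcons s b) = (0 <= final_level st s + st b) && nonneg_path st s.
Proof. by rewrite /nonneg_path ord_rcons all_rcons. Qed.
Lemma fin_ge0 s : nonneg_path st s -> 0 <= final_level st s.
Proof.
case/lastP: s => [//|s b]; rewrite nonneg_rcons fin_rcons; by case/andP.
Qed.
End Paths.

Definition V (st : bool -> int) (i : nat) (s : seq bool) :=
  nonneg_path st s && (final_level st s == i%:Z).

Lemma VtS i s : V tstep i.+1 (rcons s true) = V tstep i s.
Proof.
rewrite /V nonneg_rcons fin_rcons /tstep.
case h: (nonneg_path tstep s); last by rewrite andbF.
have := fin_ge0 h; set f := final_level tstep s => hf /=.
apply/idP/idP => [/andP[_ /eqP e]|/eqP e]; [apply/eqP|apply/andP; split; apply/eqP]; lia.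
Qed.
Lemma Vt0 s : V tstep 0 (rcons s true) = false.
Proof.
rewrite /V nonneg_rcons fin_rcons /tstep.
case h: (nonneg_path tstep s); last by rewrite andbF.
have := fin_ge0 h; set f := final_level tstep s => hf /=.
apply/negP => /andP[_ /eqP e]; lia.
Qed.
Lemma VtD i s : V tstep i (rcons s false) = V tstep i.+2 s.
Proof.
rewrite /V nonneg_rcons fin_rcons /tstep.
case h: (nonneg_path tstep s); last by rewrite andbF.
have := fin_ge0 h; set f := final_level tstep s => hf /=.
apply/idP/idP => [/andP[_ /eqP e]|/eqP e]; [apply/eqP|apply/andP; split; apply/eqP]; lia.
Qed.

Definition fz i n : int := \sum_(s <- allbs n | V tstep i s) 1.
Definition Az i n : int := \sum_(s <- allbs n | V tstep i s) area s.

Lemma area_rcons s b : area (rcons s b) = area s + final_level tstep (rcons s b).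
Proof. by rewrite /area ord_rcons -cats1 big_cat big_seq1 fin_rcons. Qed.

Lemma sumVS (F : seq bool -> int) i n :
  \sum_(s <- allbs n.+1 | V tstep i s) F s =
  \sum_(s <- allbs n) ((if V tstep i (rcons s true) then F (rcons s true) else 0)
                     + (if V tstep i (rcons s false) then F (rcons s false) else 0)).
Proof. by rewrite big_mkcond big_allbsS. Qed.

Lemma fzS i n : fz i.+1 n.+1 = fz i n + fz i.+3 n.
Proof.
rewrite /fz sumVS; under eq_bigr => s _ do rewrite VtS VtD.
by rewrite big_split /= -!big_mkcond.
Qed.
Lemma fz0S n : fz 0 n.+1 = fz 2 n.
Proof.
rewrite /fz sumVS; under eq_bigr => s _ do rewrite Vt0 VtD add0r.
by rewrite -big_mkcond.
Qed.
Lemma fz_0 i : fz i 0 = (i == 0)%N%:R.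
Proof. by rewrite /fz /= big_cons big_nil /V /final_level /=; case: i. Qed.

Lemma AzS i n : Az i.+1 n.+1 = Az i n + Az i.+3 n + (i.+1)%:R * (fz i n + fz i.+3 n).
Proof.
rewrite /Az /fz sumVS.
under eq_bigr => s _ do rewrite VtS VtD !area_rcons !fin_rcons.
rewrite mulrDr !big_distrr /= !mulr1 addrACA -!big_split /=.
rewrite [\sum_(_ <- _ | V tstep i _) _]big_mkcond [\sum_(_ <- _ | V tstep i.+3 _) _]big_mkcond -big_split /=.
apply: eq_bigr => s _.
rewrite /V /tstep; case: (nonneg_path tstep s) => //=.
case: eqP => e1; case: eqP => e2 //=; rewrite ?e1 ?e2 ?addr0 ?add0r; lia.
Qed.
Lemma Az0S n : Az 0 n.+1 = Az 2 n.
Proof.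
rewrite /Az sumVS; under eq_bigr => s _ do rewrite Vt0 VtD add0r area_rcons fin_rcons.
rewrite [RHS]big_mkcond /=; apply: eq_bigr => s _.
rewrite /V /tstep; case: (nonneg_path tstep s) => //=.
case: eqP => e //=; rewrite e; lia.
Qed.
Lemma Az_0 i : Az i 0 = 0.
Proof. rewrite /Az /= big_cons big_nil /area /=; by case: ifP; rewrite ?big_nil. Qed.


Set Implicit Arguments. Unset Strict Implicit. Unset Printing Implicit Defensive.

Definition zcoef (i : nat) (S : series) (n : nat) : rat :=
  if (i <= n)%N && (3 %| n - i)%N then S ((n - i) %/ 3)%N else 0.

Lemma zcS i S n : zcoef i.+1 S n.+1 = zcoef i S n.
Proof. by rewrite /zcoef subSS ltnS. Qed.
Lemma zc3 k S n : zcoef (k + 3) S n = zcoef k (sX * S) n.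
Proof.
rewrite /zcoef sXM.
case: (leqP (k + 3) n) => h.
  have e : (n - k = (n - (k + 3)) + 3)%N by lia.
  have hk : (k <= n)%N by lia.
  rewrite e dvdn_addl // hk /=; case: ifP => // hd.
  have -> : ((n - (k + 3) + 3) %/ 3 = (n - (k + 3)) %/ 3 + 1)%N by rewrite divnDr //= divnn.
  by rewrite addn1.
case: ifP => //= /andP[h1 h2].
have : (n - k = 0)%N.
  move: h2; have : (n - k < 3)%N by lia.
  by case: (n - k)%N => [|[|[|]]].
by move=> ->; rewrite div0n.
Qed.
Lemma zcD i (S1 S2 : series) n : zcoef i (S1 + S2) n = zcoef i S1 n + zcoef i S2 n.
Proof. by rewrite /zcoef; case: ifP; rewrite ?addr0. Qed.
Lemma zcnat i m (S : series) n : zcoef i (m%:R * S) n = m%:R * zcoef i S n.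
Proof. by rewrite /zcoef; case: ifP; rewrite ?mulr0 // snatM. Qed.
Lemma zc01 n : zcoef 0 1 n.+1 = 0.
Proof.
rewrite /zcoef s1; case: ifP => // /andP[_ h]; rewrite subn0 in h.
have : ((n.+1 %/ 3) != 0)%N.
  rewrite -lt0n divn_gt0 //; by apply: dvdn_leq.
by move/negbTE ->.
Qed.

Section Main.
Variable t : series.
Hypothesis ht0 : t 0%N = 0.
Hypothesis htx : t * ((1 - t) * (1 - t)) = sX.

Lemma T0 : T t 0%N = 1.
Proof. by rewrite /T /sinv /= sB s1 ht0 subr0 invr1. Qed.
Lemma A0 : A t 0%N = 0.
Proof. by rewrite /A !sM0 ht0 mulr0 mul0r. Qed.

Lemma main_ind n : forall i, (fz i n)%:~R = zcoef i (T t ^+ i.+1) n /\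
                             (Az i n)%:~R = zcoef i (Aform t i) n.
Proof.
elim: n => [|n IH] i.
  rewrite fz_0 Az_0 /zcoef; case: i => [|i] /=; last by rewrite !rmorph0.
  by rewrite expr1 T0 /Aform expr0 mul1r mul0r addr0 mul1r A0 rmorph0.
case: i => [|j].
  rewrite fz0S Az0S; have [f2 a2] := IH 2%N.
  rewrite f2 a2; split.
    rewrite -zcS (_ : 3%N = 0 + 3)%N // zc3 expr1 {2}(I1 ht0 htx) zcD zc01 add0r //.
  rewrite -zcS (_ : 3%N = 0 + 3)%N // zc3 -(I3 ht0 htx).
  by rewrite /Aform expr0 mul1r mul0r addr0 mul1r.
have fS : (fz j.+1 n.+1)%:~R = zcoef j.+1 (T t ^+ j.+2) n.+1.
  by rewrite fzS intrD (IH j).1 (IH j.+3).1 zcS (I2 ht0 htx j) zcD -zc3 addn3.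
split=> //.
rewrite AzS !intrD intrM (IH j).2 (IH j.+3).2 -fzS fS zcS.
rewrite zcS (I4 ht0 htx j) !zcD zcnat -zc3 addn3 natz.
by [].
Qed.
End Main.


Set Implicit Arguments. Unset Strict Implicit. Unset Printing Implicit Defensive.

Definition VF (h : int) (q : seq bool) :=
  all (fun x => 0 <= x) (scanl (stepf tstep) h q) && (last h (scanl (stepf tstep) h q) == 0).
Definition Vr (h : int) (r : seq bool) :=
  nonneg_path rstep r && (final_level rstep r == h).

Lemma revVF q : forall h, 0 <= h -> VF h q = Vr h (rev (map negb q)).
Proof.
elim: q => [|b q IH] h h0.
  by rewrite /VF /Vr /= eq_sym.
rewrite /= rev_cons /Vr nonneg_rcons fin_rcons.
rewrite /VF /= -andbA -/(VF _ q).
have eb : rstep (~~ b) = - tstep b by case: b.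
set h' := stepf tstep h b.
case: (leP 0 h') => hp /=.
  rewrite IH // /Vr eb.
  case hn: (nonneg_path rstep (rev (map negb q))) => /=; last by rewrite andbF.
  have := fin_ge0 hn; set f := final_level _ _ => hf.
  move: hp; rewrite /h' /stepf => hp.
  apply/idP/idP => [/eqP e|/andP[_ /eqP e]]; [apply/andP; split; apply/eqP|apply/eqP]; lia.
apply/esym/negP; rewrite eb => /andP[/andP[_ hn] /eqP e].
have := fin_ge0 hn; move: hp; rewrite /h' /stepf; lia.
Qed.

Lemma fin_le_size p : final_level tstep p <= (size p)%:Z.
Proof.
elim/last_ind: p => [//|p b IH]; rewrite fin_rcons size_rcons.
have : tstep b <= 1 by case: b.
lia.
Qed.

Lemma area_take s : area s = \sum_(a < (size s).+1) final_level tstep (take a s).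
Proof.
elim/last_ind: s => [|s b IH]; first by rewrite big_ord1 /area big_nil.
rewrite area_rcons IH size_rcons [RHS]big_ord_recr /= take_oversize ?size_rcons //.
congr (_ + _); apply: eq_bigr => a _.
by rewrite -cats1 takel_cat // -ltnS.
Qed.

Lemma V0_cat p q : V tstep 0 (p ++ q) = nonneg_path tstep p && VF (final_level tstep p) q.
Proof.
have e : ordinates tstep (p ++ q) = ordinates tstep p ++ scanl (stepf tstep) (final_level tstep p) q.
  by rewrite /ordinates scanl_cat fin_foldl.
rewrite /V /nonneg_path /final_level e all_cat last_cat /VF -andbA.
by rewrite -/(final_level tstep p).
Qed.

Lemma split_sum (G : seq bool -> int) a m : (a <= m)%N ->
  \sum_(s <- allbs m) G s = \sum_(p <- allbs a) \sum_(q <- allbs (m - a)) G (p ++ q).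
Proof.
move=> am; rewrite -big_allpairs_dep; apply: perm_big.
apply: uniq_perm; first exact: uniq_allbs.
  apply: allpairs_uniq; try exact: uniq_allbs.
  move=> [p q] [p' q'] /allpairsP[[x y] /= [hx hy [-> ->]]] /allpairsP[[x' y'] /= [hx' hy' [-> ->]]] /= /eqP.
  rewrite eqseq_cat; last by move: hx hx'; rewrite !mem_allbs => /eqP -> /eqP ->.
  by case/andP => /eqP -> /eqP ->.
move=> s; rewrite mem_allbs; apply/idP/allpairsP => [/eqP hs|[[p q] /= [hp hq ->]]].
  exists (take a s, drop a s); rewrite /= cat_take_drop !mem_allbs size_take size_drop hs.
  split=> //; case: ltnP => // h; apply/eqP; lia.

by move: hp hq; rewrite !mem_allbs size_cat => /eqP -> /eqP ->; rewrite subnKC.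
Qed.

Definition gz i n : int := \sum_(s <- allbs n | Vr i%:Z s) 1.

Lemma gz_VF i b : \sum_(q <- allbs b | VF i%:Z q) 1 = gz i b.
Proof.
rewrite /gz; under eq_bigl => q do rewrite revVF //.
rewrite -(big_map (fun q => rev (map negb q)) (fun r => Vr i%:Z r) (fun _ => 1)).
apply: perm_big; apply: uniq_perm; last 1 first.
- move=> r; rewrite mem_allbs; apply/mapP/idP => [[q hq ->]|hr].
    by rewrite size_rev size_map -mem_allbs.
  exists (rev (map negb r)); first by rewrite mem_allbs size_rev size_map.
  by rewrite map_rev revK -map_comp map_id_in // => x _ /=; rewrite negbK.
- rewrite map_inj_uniq ?uniq_allbs // => x y /(congr1 rev); rewrite !revK.
  move/(congr1 (map negb)); rewrite -!map_comp !map_id_in //; by move=> z _ /=; rewrite negbK.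
- exact: uniq_allbs.
Qed.

Lemma partition_fin (K : seq bool -> int) a m : (a <= m)%N ->
  \sum_(p <- allbs a | nonneg_path tstep p) K p =
  \sum_(i < m.+1) \sum_(p <- allbs a | V tstep i p) K p.
Proof.
move=> am; rewrite (exchange_big_dep predT) //= big_mkcond big_seq [RHS]big_seq.
apply: eq_bigr => p; rewrite mem_allbs => /eqP hp.
case hn: (nonneg_path tstep p); last first.
  by rewrite big_pred0 // => i; rewrite /V hn.
have := fin_ge0 hn; have := fin_le_size p; rewrite hp.
case E: (final_level tstep p) => [k|k] // hk _.
have km : (k < m.+1)%N by lia.
rewrite (big_pred1 (Ordinal km)) // => i /=.
by rewrite /V hn E /= eqz_nat eq_sym.
Qed.

Lemma Az0_split m : Az 0 m = \sum_(i < m.+1) i%:R * \sum_(a < m.+1) fz i a * gz i (m - a).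
Proof.
rewrite /Az big_seq_cond.
rewrite (eq_bigr (fun s => \sum_(a < m.+1) final_level tstep (take a s))); last first.
  by move=> s /andP[hs _]; rewrite area_take; move: hs; rewrite mem_allbs => /eqP ->.
rewrite -big_seq_cond exchange_big /=.
under [RHS]eq_bigr => i _ do rewrite big_distrr.
rewrite [RHS]exchange_big /=; apply: eq_bigr => a _.
have am : (a <= m)%N by have := ltn_ord a; lia.
rewrite big_mkcond (split_sum _ am) big_seq.
rewrite (eq_bigr (fun p => if nonneg_path tstep p then
   final_level tstep p * \sum_(q <- allbs (m - a) | VF (final_level tstep p) q) 1 else 0)); last first.
  move=> p; rewrite mem_allbs => /eqP hp.
  under eq_bigr => q _ do rewrite V0_cat take_size_cat //.
  case: (nonneg_path tstep p) => /=; last by rewrite big1.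
  rewrite big_distrr /= [RHS]big_mkcond; apply: eq_bigr => q _.
  by case: (VF _ q); rewrite ?mulr1.
rewrite -big_seq -big_mkcond (partition_fin _ am); apply: eq_bigr => i _.
rewrite (eq_bigr (fun _ => i%:R * gz i (m - a))); last first.
  by move=> p /andP[_ /eqP ->]; rewrite gz_VF natz.
set c := i%:R * gz i (m - a).
rewrite [RHS](_ : _ = c * fz i a); last by rewrite /c; ring.
rewrite /fz big_distrr /=; apply: eq_bigr => p _; by rewrite mulr1.
Qed.


Set Implicit Arguments. Unset Strict Implicit. Unset Printing Implicit Defensive.

Lemma tuple_sum (F : seq bool -> int) (Pr : pred (seq bool)) n :
  \sum_(s : n.-tuple bool | Pr s) F s = \sum_(s <- allbs n | Pr s) F s.
Proof.
rewrite -(big_map (@tval n bool) Pr F); apply: perm_big; apply: uniq_perm.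
- by rewrite map_inj_uniq ?index_enum_uniq //; exact: val_inj.
- exact: uniq_allbs.
move=> s; rewrite mem_allbs; apply/mapP/idP => [[x _ ->]|hs].
  by rewrite size_tuple.
by exists (Tuple hs); rewrite ?mem_index_enum.
Qed.

Lemma card_sum (Pr : pred (seq bool)) n :
  (#|[set s : n.-tuple bool | Pr s]|)%:Z = \sum_(s <- allbs n | Pr s) 1.
Proof.
rewrite -sum1_card -natz natr_sum -tuple_sum; apply: eq_bigl => s.
by rewrite inE.
Qed.

Lemma fcoefE i n : (f_coef i n)%:Z = fz i n.
Proof. exact: (card_sum (V tstep i) n). Qed.
Lemma gcoefE i n : (g_coef i n)%:Z = gz i n.
Proof. exact: (card_sum (Vr i%:Z) n). Qed.
Lemma SE m : (S_coef m)%:Z = Az 0 m.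
Proof.
rewrite Az0_split /S_coef -natz natr_sum; apply: eq_bigr => i _.
rewrite natrM natr_sum; congr (_ * _); apply: eq_bigr => a _.
by rewrite natrM !natz fcoefE gcoefE.
Qed.
Lemma total_areaE N : total_area N = Az 0 (3 * N).
Proof. exact: (tuple_sum area (V tstep 0) (3 * N)). Qed.

Unset Implicit Arguments.
Theorem mainTheorem9 (t : series) :
  t 0%N = 0 ->
  (forall n, smul t (smul (ssub (sconst 1) t) (ssub (sconst 1) t)) n = sX n) ->
  (forall N : nat,
      S_coef (3 * N).+1 = 0%N /\ S_coef (3 * N).+2 = 0%N /\
      (S_coef (3 * N))%:R = rhs_series t N) /\
  (forall N : nat, (S_coef (3 * N))%:Z = total_area N).
Proof.
move=> ht0 htx'.
have htx : t * ((1 - t) * (1 - t)) = sX := @sfunext _ _ htx'.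
have key m : ((S_coef m)%:Z)%:~R = zcoef 0 (A t) m :> rat.
  rewrite SE (main_ind ht0 htx m 0).2 /Aform expr0 mul1r mul0r addr0 mul1r //.
have z0 m : ~~ (3 %| m)%N -> S_coef m = 0%N.
  move=> hm; have := key m; rewrite /zcoef subn0 (negbTE hm) andbF => /eqP.
  by rewrite intr_eq0 => /eqP [].
split=> N; last by rewrite SE total_areaE.
split. apply: z0. rewrite -[(3 * N).+1]addn1 dvdn_addr //; exact: dvdn_mulr.
split. apply: z0. rewrite -[(3 * N).+2]addn2 dvdn_addr //; exact: dvdn_mulr.
have -> : rhs_series t = A t by rewrite /rhs_series !sscaleE sconst3.
rewrite (_ : (S_coef (3 * N))%:R = ((S_coef (3 * N))%:Z)%:~R) // key /zcoef.
by rewrite leq0n subn0 dvdn_mulr //= mulKn.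
Qed.
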